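(* Every consistent $L_\theta$-theory of the form $$T_\theta\cup\Big\{\sum_k\bigcap_l\mathrm{Ker}(\rho_{j,k,l})=\sum_k\bigcap_l\mathrm{Ker}(\eta_{j,k,l}):j\in\mathcal J\Big\},$$ with $\mathcal J$ an arbitrary index set, all sums and intersections finite and all $\rho_{j,k,l},\eta_{j,k,l}\in K[X]$, is equivalent to $T_\theta^C$ for some kernel configuration $C$.
   Context: Setting: $L$ is a first-order language, $T$ a model-complete $L$-theory and $K$ a field. There are $L$-formulas without parameters which define, in every model $\mathcal M\models T$, a nontrivial (infinite) $K$-vector space $\mathbb V=\mathbb V^{\mathcal M}$; elements of $\mathbb V$ are treated as single elements. $L_\theta=L\cup\{\theta\}$, $\theta$ a new unary function symbol; $T_\theta$ is $T$ plus axioms saying $\theta|_{\mathbb V}$ is a $K$-linear endomorphism of $\mathbb V$ and $\theta(x)=0$ for $x\notin\mathbb V$. For $\rho=\sum_i(\rho)_iX^i\in K[X]$, $\rho[\theta]:=\sum_i(\rho)_i\theta^i$, $\mathrm{Ker}(\rho)=\{v\in\mathbb V:\rho[\theta](v)=0\}$; an equation of sums of intersections of kernels is the sentence asserting equality of these definable sets. $K[X]_{\mathrm{irr}}$ is the set of monic irreducible polynomials. A kernel configuration is a pair $C=(c,d)$ with $c:K[X]_{\mathrm{irr}}\to\mathbb N\cup\{\infty\}$ and $d\in\mathbb N_{>0}\cup\{\infty\}$ such that $d=\infty$ or $d=\sum_f\deg(f)c(f)$; write $C(f)=c(f)$. $C$ is algebraic if $d<\infty$, with minimal polynomial $\mathrm{MiPo}(C)=\prod_ff^{C(f)}$,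 and transcendental otherwise. $\theta$ is a $C$-endomorphism if $\mathrm{Ker}(\mathrm{MiPo}(C))=\mathbb V$ (algebraic case), resp. $\mathrm{Ker}(f^{C(f)})=\mathrm{Ker}(f^{C(f)+1})$ for all $f$ with $C(f)<\infty$ (transcendental case). $T^C_\theta:=T_\theta\cup\{\theta|_{\mathbb V}\text{ is a }C\text{-endomorphism}\}$. Two theories are equivalent if they have the same models. *)

(* Defs.v *)
From mathcomp Require Import all_boot all_order all_algebra.
From Stdlib Require List.
Set Implicit Arguments.
Unset Strict Implicit.
Unset Printing Implicit Defensive.
Import GRing.Theory.
Local Open Scope ring_scope.

Record language := Language {
  fsym : Type; fari : fsym -> nat;
  rsym : Type; rari : rsym -> nat }.

Section FOL.
Variable L : language.

Inductive term :=
  | tvar of nat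
  | tapp (f : fsym L) of ('I_(fari f) -> term).

Inductive formula :=
  | feq of term & term
  | frel (r : rsym L) of ('I_(rari r) -> term)
  | fbot
  | fnot of formula
  | fand of formula & formula
  | for_ of formula & formula
  | fimp of formula & formula
  | fall of nat & formula
  | fex of nat & formula.

Record structure := Structure {
  carrier :> Type;
  inhab : carrier;
  finterp : forall f : fsym L, ('I_(fari f) -> carrier) -> carrier;
  rinterp : forall r : rsym L, ('I_(rari r) -> carrier) -> Prop }.

Fixpoint teval (M : structure) (s : nat -> M) (t : term) : M :=
  match t with
  | tvar n => s n
  | tapp f a => finterp (fun i => teval s (a i))
  end.

Definition upd (M : structure) (s : nat -> M) (n : nat) (m : M) : nat -> M :=
  fun k => if k == n then m else s k.

Fixpoint sat (M : structure) (s : nat -> M) (phi : formula) : Prop :=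
  match phi with
  | feq t u => teval s t = teval s u
  | frel r a => rinterp (fun i => teval s (a i))
  | fbot => False
  | fnot p => ~ sat s p
  | fand p q => sat s p /\ sat s q
  | for_ p q => sat s p \/ sat s q
  | fimp p q => sat s p -> sat s q
  | fall n p => forall m : M, sat (upd s n m) p
  | fex n p => exists m : M, sat (upd s n m) p
  end.

Fixpoint tfv (x : nat) (t : term) : Prop :=
  match t with
  | tvar n => x = n
  | tapp f a => exists i, tfv x (a i)
  end.

Fixpoint fv (x : nat) (phi : formula) : Prop :=
  match phi with
  | feq t u => tfv x t \/ tfv x u
  | frel r a => exists i, tfv x (a i)
  | fbot => False
  | fnot p => fv x p
  | fand p q | for_ p q | fimp p q => fv x p \/ fv x q
  | fall n p | fex n p => x <> n /\ fv x p
  end.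

Definition fv_below (k : nat) (phi : formula) : Prop :=
  forall x, fv x phi -> (x < k)%N.

Definition sentence (phi : formula) : Prop := forall x, ~ fv x phi.

Definition theory := formula -> Prop.
Definition is_theory (T : theory) : Prop := forall phi, T phi -> sentence phi.

Definition models (T : theory) (M : structure) : Prop :=
  forall phi, T phi -> forall s : nat -> M, sat s phi.

Definition embedding (M N : structure) (h : M -> N) : Prop :=
  injective h /\
  (forall f (a : 'I_(fari f) -> M), h (finterp a) = finterp (fun i => h (a i))) /\
  (forall r (a : 'I_(rari r) -> M), rinterp a <-> rinterp (fun i => h (a i))).

Definition elementary (M N : structure) (h : M -> N) : Prop :=
  forall (phi : formula) (s : nat -> M), sat s phi <-> sat (fun n => h (s n)) phi.

Definition model_complete (T : theory) : Prop :=
  forall M N : structure, models T M -> models T N ->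
  forall h : M -> N, embedding h -> elementary h.

End FOL.

Section VS.
Variable L : language.
Variable K : fieldType.

(* parameter-free formulas defining V, its zero, its addition (as a graph)
   and the scalar multiplication by each a in K (as a graph) *)
Record vsdef := VSDef {
  phiV : formula L;      (* x0 \in V *)
  phi0 : formula L;      (* x0 = 0_V *)
  phiadd : formula L;    (* x0, x1 \in V /\ x2 = x0 + x1 *)
  phisc : K -> formula L (* x0 \in V /\ x1 = a . x0 *) }.

Record vsops (M : structure L) := VSOps {
  vin : M -> Prop;
  vzero : M;
  vadd : M -> M -> M;
  vscale : K -> M -> M }.

Definition defines (D : vsdef) (M : structure L) (o : vsops M) : Prop :=
  (forall s : nat -> M, sat s (phiV D) <-> vin o (s 0%N)) /\
  (forall s : nat -> M, sat s (phi0 D) <-> s 0%N = vzero o) /\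
  (forall s : nat -> M, sat s (phiadd D) <->
      [/\ vin o (s 0%N), vin o (s 1%N) & s 2%N = vadd o (s 0%N) (s 1%N)]) /\
  (forall (a : K) (s : nat -> M), sat s (phisc D a) <->
      vin o (s 0%N) /\ s 1%N = vscale o a (s 0%N)).

Definition is_vspace (M : structure L) (o : vsops M) : Prop :=
  let V := vin o in let z := vzero o in let ad := vadd o in let sc := vscale o in
  [/\ V z,
      (forall u v, V u -> V v -> V (ad u v)),
      (forall a v, V v -> V (sc a v)),
      (forall u v w, V u -> V v -> V w -> ad u (ad v w) = ad (ad u v) w) &
      (forall u v, V u -> V v -> ad u v = ad v u)] /\
  [/\ (forall v, V v -> ad z v = v),
      (forall v, V v -> ad v (sc (-1) v) = z) &
      (forall v, V v -> sc 1 v = v)] /\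
  [/\ (forall a b v, V v -> sc (a * b) v = sc a (sc b v)),
      (forall a u v, V u -> V v -> sc a (ad u v) = ad (sc a u) (sc a v)) &
      (forall a b v, V v -> sc (a + b) v = ad (sc a v) (sc b v))].

Definition vs_infinite (M : structure L) (o : vsops M) : Prop :=
  forall l : list M, exists v, vin o v /\ ~ List.In v l.

Definition defines_vs_in (T : theory L) (D : vsdef) : Prop :=
  [/\ fv_below 1 (phiV D), fv_below 1 (phi0 D), fv_below 3 (phiadd D),
      (forall a, fv_below 2 (phisc D a)) &
      forall M : structure L, models T M ->
        exists o : vsops M, [/\ defines D o, is_vspace o & vs_infinite o]].

(* L_theta-structures: an L-structure together with the interpretation *)
(* theta : M -> M of the new unary function symbol.                     *)

Section Theta.
Variable M : structure L.
Variable o : vsops M.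
Variable theta : M -> M.

Definition peval (rho : {poly K}) (v : M) : M :=
  foldr (fun i acc => vadd o (vscale o rho`_i (iter i theta v)) acc)
        (vzero o) (iota 0 (size rho)).

Definition inKer (rho : {poly K}) (v : M) : Prop :=
  vin o v /\ peval rho v = vzero o.

Definition inCapKer (rhos : seq {poly K}) (v : M) : Prop :=
  vin o v /\ forall rho, rho \in rhos -> inKer rho v.

Fixpoint inSumCapKer (rhoss : seq (seq {poly K})) (v : M) : Prop :=
  match rhoss with
  | [::] => v = vzero o
  | rhos :: rest => exists w u, [/\ inCapKer rhos w, inSumCapKer rest u &
                                    v = vadd o w u]
  end.

Definition theta_axioms : Prop :=
  [/\ (forall v, vin o v -> vin o (theta v)),
      (forall u v, vin o u -> vin o v -> theta (vadd o u v) = vadd o (theta u) (theta v)),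
      (forall a v, vin o v -> theta (vscale o a v) = vscale o a (theta v)) &
      (forall x, ~ vin o x -> theta x = vzero o)].

Definition kernel_equation (e : seq (seq {poly K}) * seq (seq {poly K})) : Prop :=
  forall v, inSumCapKer e.1 v <-> inSumCapKer e.2 v.

End Theta.

Definition models_Ttheta (T : theory L) (D : vsdef) (M : structure L)
    (theta : M -> M) : Prop :=
  models T M /\ forall o : vsops M, defines D o -> theta_axioms o theta.

Definition models_TthetaE (T : theory L) (D : vsdef) (J : Type)
    (E : J -> seq (seq {poly K}) * seq (seq {poly K}))
    (M : structure L) (theta : M -> M) : Prop :=
  models_Ttheta T D theta /\
  forall o : vsops M, defines D o -> forall j, kernel_equation o theta (E j).

(* Kernel configurations. c : K[X]_irr -> N \cup {oo} is modelled as    *)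
(* {poly K} -> option nat (None = oo; values off K[X]_irr are ignored), *)
(* d \in N_{>0} \cup {oo} as option nat (None = oo).                    *)

Definition monic_irr (f : {poly K}) : Prop := f \is monic /\ irreducible_poly f.

Definition finite_support (c : {poly K} -> option nat) (s : seq {poly K}) : Prop :=
  [/\ uniq s, (forall f, f \in s -> monic_irr f),
      (forall f, monic_irr f -> f \notin s -> c f = Some 0%N) &
      (forall f, f \in s -> c f <> None)].

Definition is_kconf (c : {poly K} -> option nat) (d : option nat) : Prop :=
  d <> Some 0%N /\
  (d = None \/ exists s, finite_support c s /\
       d = Some (\sum_(f <- s) (size f).-1 * odflt 0%N (c f))%N).

Definition mipo_along (c : {poly K} -> option nat) (s : seq {poly K}) : {poly K} :=
  \prod_(f <- s) f ^+ odflt 0%N (c f).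

Definition C_endo (M : structure L) (o : vsops M) (theta : M -> M)
    (c : {poly K} -> option nat) (d : option nat) : Prop :=
  match d with
  | Some _ =>
      forall s, finite_support c s ->
        forall v, vin o v <-> inKer o theta (mipo_along c s) v
  | None =>
      forall f, monic_irr f -> forall n, c f = Some n ->
        forall v, inKer o theta (f ^+ n) v <-> inKer o theta (f ^+ n.+1) v
  end.

Definition models_TthetaC (T : theory L) (D : vsdef)
    (c : {poly K} -> option nat) (d : option nat)
    (M : structure L) (theta : M -> M) : Prop :=
  models_Ttheta T D theta /\
  forall o : vsops M, defines D o -> C_endo o theta c d.

End VS.

(* Main.v *)
Require Import Defs.
From HB Require Import structures.
From mathcomp Require Import all_boot all_order all_algebra.
From mathcomp Require Import boolp.
From mathcomp Require Import ring.
From Stdlib Require Import Classical.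
Set Implicit Arguments. Unset Strict Implicit. Unset Printing Implicit Defensive.
Import GRing.Theory.

Section Act.
Local Open Scope ring_scope.
Variables (K : fieldType) (V : lmodType K) (th : {linear V -> V}).

Definition act (p : {poly K}) (v : V) : V := \sum_(i < size p) p`_i *: iter i th v.

Lemma act_pad (p : {poly K}) (v : V) n : (size p <= n)%N -> act p v = \sum_(i < n) p`_i *: iter i th v.
Proof.
move=> le; rewrite /act (big_ord_widen n (fun i => p`_i *: iter i th v) le) big_mkcond /=.
apply: eq_bigr => i _; case: ifP => // /negbT; rewrite -leqNgt => h.
by rewrite nth_default // scale0r.
Qed.

Lemma act_add p q v : act (p + q) v = act p v + act q v.
Proof.
set n := maxn (size p) (size q).
rewrite (@act_pad (p + q) v n) ?(leq_trans (size_polyD _ _)) //.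
rewrite (@act_pad p v n) ?leq_maxl // (@act_pad q v n) ?leq_maxr //.
by rewrite -big_split /=; apply: eq_bigr => i _; rewrite coefD scalerDl.
Qed.

Lemma act_scale a p v : act (a *: p) v = a *: act p v.
Proof.
rewrite (@act_pad (a *: p) v (size p)) ?size_scale_leq // /act scaler_sumr.
by apply: eq_bigr => i _; rewrite coefZ scalerA.
Qed.

Lemma iter_add i u w : iter i th (u + w) = iter i th u + iter i th w.
Proof. by elim: i => //= i ->; rewrite linearD. Qed.
Lemma iter_scale i a u : iter i th (a *: u) = a *: iter i th u.
Proof. by elim: i => //= i ->; rewrite linearZ. Qed.

Lemma act_addv p u w : act p (u + w) = act p u + act p w.
Proof. by rewrite /act -big_split; apply: eq_bigr => i _; rewrite iter_add scalerDr. Qed.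
Lemma act_scalev p a u : act p (a *: u) = a *: act p u.
Proof. by rewrite /act scaler_sumr; apply: eq_bigr => i _; rewrite iter_scale !scalerA mulrC. Qed.
Lemma act_0v p : act p 0 = 0.
Proof. by move: (act_scalev p 0 0); rewrite !scale0r. Qed.

Lemma act_C c v : act c%:P v = c *: v.
Proof.
rewrite (@act_pad _ v 1) ?size_polyC_leq1 // big_ord1 /=.
by rewrite coefC.
Qed.
Lemma act_1 v : act 1 v = v.
Proof. by rewrite -polyC1 act_C scale1r. Qed.
Lemma act_0 v : act 0 v = 0.
Proof. by rewrite -polyC0 act_C scale0r. Qed.

Lemma act_mulX p v : act (p * 'X) v = act p (th v).
Proof.
have [->|pn0] := eqVneq p 0; first by rewrite mul0r !act_0.
rewrite {1}/act size_mulX // big_ord_recl /= coefMX /= scale0r add0r /act.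
by apply: eq_bigr => i _; rewrite coefMX /= -iterSr. 
Qed.

Lemma th_act p v : th (act p v) = act p (th v).
Proof.
rewrite /act linear_sum; apply: eq_bigr => i _.
by rewrite linearZ /= -iterS iterSr.
Qed.

Lemma act_mul p q v : act (p * q) v = act p (act q v).
Proof.
elim/poly_ind: p v => [|p c IH] v; first by rewrite mul0r !act_0.
rewrite mulrDl act_add -mulrA (mulrC 'X) mulrA act_mulX IH -th_act.
by rewrite mul_polyC act_scale act_add act_mulX act_C.
Qed.

Lemma act_opp p v : act (- p) v = - act p v.
Proof. by rewrite -[- p]scaleN1r act_scale scaleN1r. Qed.
Lemma act_sub p q v : act (p - q) v = act p v - act q v.
Proof. by rewrite act_add act_opp. Qed.

End Act.

Section Ker.
Local Open Scope ring_scope.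
Variables (K : fieldType) (V : lmodType K) (th : {linear V -> V}).
Local Notation act := (act th).

Lemma ker_dvd p q v : p %| q -> act p v = 0 -> act q v = 0.
Proof. by case/dvdpP => r -> h; rewrite act_mul h act_0v. Qed.

Lemma ker_eqp p q v : p %= q -> (act p v = 0 <-> act q v = 0).
Proof. by move=> /andP[h1 h2]; split; apply: ker_dvd. Qed.

Lemma bezout1 (p q : {poly K}) : coprimep p q -> exists u w, u * p + w * q = 1.
Proof.
case/Bezout_coprimepP => [[u w]] /= h.
move: (h); rewrite -size_poly_eq1 => /eqP hs.
have e := size1_polyC (eq_leq hs).
set c := _`_0 in e.
have c0 : c != 0.
  by apply/eqP => c0; move: hs; rewrite e c0 size_polyC eqxx.
exists (c^-1 *: u), (c^-1 *: w).
by rewrite -!scalerAl -scalerDr e -mul_polyC -polyCM mulVf.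
Qed.

Lemma ker_gcd p q v : (act p v = 0 /\ act q v = 0) <-> act (gcdp p q) v = 0.
Proof.
split=> [[hp hq]|hg].
  case: (Bezoutp p q) => [[u w]] /= /ker_eqp <-.
  by rewrite act_add !act_mul hp hq !act_0v addr0.
by split; apply: ker_dvd hg; rewrite ?dvdp_gcdl ?dvdp_gcdr.
Qed.

Definition plcm (p q : {poly K}) : {poly K} :=
  if (p == 0) || (q == 0) then 0 else p * (q %/ gcdp p q).

Lemma ker_lcm p q v :
  (exists a b, [/\ act p a = 0, act q b = 0 & v = a + b]) <-> act (plcm p q) v = 0.
Proof.
rewrite /plcm; have [->|pn0] /= := eqVneq p 0.
  rewrite act_0; split=> // _; exists v, 0; by rewrite act_0 act_0v addr0.
have [->|qn0] /= := eqVneq q 0.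
  rewrite act_0; split=> // _; exists 0, v; by rewrite act_0 act_0v add0r.
set g := gcdp p q.
have cop : coprimep (p %/ g) (q %/ g) by apply: coprimep_div_gcd; rewrite pn0.
have ep : p %/ g * g = p by rewrite divpK // dvdp_gcdl.
have eq : q %/ g * g = q by rewrite divpK // dvdp_gcdr.
have e2 : p * (q %/ g) = (p %/ g) * q by rewrite -{1}ep -{2}eq mulrAC -mulrA.
split.
  case=> a [b [ha hb ->]]; rewrite act_addv {2}e2 !act_mul -act_mul mulrC act_mul.
  by rewrite ha hb !act_0v addr0.
move=> hv; case: (bezout1 cop) => u [w] e.
exists (act (w * (q %/ g)) v), (act (u * (p %/ g)) v); split.
- by rewrite -act_mul mulrA (mulrC p) -mulrA act_mul hv act_0v.
- by rewrite -act_mul mulrCA (mulrC q) -e2 act_mul hv act_0v.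
- by rewrite -act_add addrC e act_1.
Qed.

End Ker.

Section PolyFacts.
Local Open Scope ring_scope.
Variable K : fieldType.
Implicit Types f g h p q : {poly K}.

Lemma irr_size f : irreducible_poly f -> (1 < size f)%N.
Proof. by case. Qed.

Lemma irr_neq0 f : irreducible_poly f -> f != 0.
Proof. exact: irredp_neq0. Qed.

Lemma irr_coprime f p : irreducible_poly f -> ~~ (f %| p) -> coprimep f p.
Proof.
move=> irr ndvd; rewrite -gcdp_eqp1.
case: (irredp_XsubCP irr (dvdp_gcdl f p)) => // e.
by move: ndvd; rewrite -(eqp_dvdl _ e) dvdp_gcdr.
Qed.

Lemma irr_prime f p q : irreducible_poly f -> f %| p * q -> f %| p \/ f %| q.
Proof.
move=> irr d; case: (boolP (f %| p)) => hp; [by left | right].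
by rewrite -(Gauss_dvdpr _ (irr_coprime irr hp)).
Qed.

Lemma monic_irr_dvd f g : monic_irr f -> monic_irr g -> g %| f -> g = f.
Proof.
move=> [mf irf] [mg irg] d.
case: (irredp_XsubCP irf d) => e.
  by move: (irr_size irg); rewrite (eqp_size e) size_poly1.
by apply/eqP; rewrite -eqp_monic.
Qed.

Lemma monic_irr_coprime f g : monic_irr f -> monic_irr g -> f != g -> coprimep f g.
Proof.
move=> hf hg ne; apply: irr_coprime; first by case: hf.
by apply/negP => /(monic_irr_dvd hg hf) e; move: ne; rewrite e eqxx.
Qed.

Lemma monic_irr_factor p : (1 < size p)%N -> exists f, monic_irr f /\ f %| p.
Proof.
elim: {p}(size p) {-2}p (leqnn (size p)) => [|n IH] p hs hp.
  by move: hs; rewrite leqn0 => /eqP e; rewrite e in hp.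
have [irr|nirr] := (classic (irreducible_poly p)).
  have pn0 : p != 0 by apply: irr_neq0.
  have ln0 : (lead_coef p)^-1 != 0 by rewrite invr_eq0 lead_coef_eq0.
  exists ((lead_coef p)^-1 *: p); split; last by rewrite dvdpZl.
  split; first by rewrite monicE lead_coefZ mulVf // lead_coef_eq0.
  split; first by rewrite size_scale.
  move=> q sq; rewrite dvdpZr // => d.
  by apply: eqp_trans (irr q sq d) _; rewrite eqp_sym eqp_scale.
have [q [sq [dq nq]]] : exists q, [/\ size q != 1%N, q %| p & ~ (q %= p)].
  apply: NNPP => hn; apply: nirr; split => // q sq dq.
  by apply: NNPP => nq; apply: hn; exists q.
have pn0 : p != 0 by rewrite -size_poly_gt0 (ltn_trans _ hp).
have qn0 : q != 0 by apply/eqP => e; move: dq; rewrite e dvd0p (negPf pn0).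
have sqp : (size q < size p)%N.
  rewrite ltn_neqAle dvdp_leq // andbT dvdp_size_eqp //; exact/negP.
have [||f [hf df]] := IH q.
- by rewrite -ltnS (leq_trans sqp hs).
- by rewrite ltn_neqAle eq_sym sq /= size_poly_gt0 qn0.
- by exists f; split => //; exact: (dvdp_trans df dq).
Qed.

End PolyFacts.

Section Mult.
Local Open Scope ring_scope.
Variable K : fieldType.
Implicit Types f g h p q : {poly K}.

Lemma factors p : p != 0 ->
  exists s, uniq s /\ (forall f, f \in s <-> monic_irr f /\ f %| p).
Proof.
elim: {p}(size p) {-2}p (leqnn (size p)) => [|n IH] p hs pn0.
  by move: hs; rewrite leqn0 size_poly_eq0 (negPf pn0).
have [hp|hp] := leqP (size p) 1.
  exists [::]; split => // f; split => // [[[_ irf] d]].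
  by move: (leq_trans (dvdp_leq pn0 d) hp); rewrite leqNgt irr_size.
have [f0 [hf0 d0]] := monic_irr_factor hp.
have f0n0 : f0 != 0 by case: hf0 => /monic_neq0.
set p1 := p %/ f0.
have ep : p1 * f0 = p by rewrite divpK.
have p1n0 : p1 != 0 by apply/eqP => e; move: pn0; rewrite -ep e mul0r eqxx.
have [|s1 [u1 h1]] := IH p1 _ p1n0.
  rewrite -ltnS (leq_trans _ hs) // -ep size_mul //.
  move: (irr_size hf0.2); case: (size f0) => // m hm.
  by rewrite addnS /= -addn1 leq_add2l.
exists (undup (f0 :: s1)); split; first exact: undup_uniq.
move=> f; rewrite mem_undup in_cons; split.
  case/orP => [/eqP -> | /h1 [hf df]]; first by split.
  by split => //; rewrite -ep dvdp_mulr.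
move=> [hf df]; rewrite -ep in df.
case: (irr_prime hf.2 df) => d.
  by apply/orP; right; apply/h1.
by apply/orP; left; apply/eqP; apply: monic_irr_dvd.
Qed.

Lemma mult_ex f h : exists n, (size h <= n)%N || ~~ (f ^+ n.+1 %| h).
Proof. by exists (size h); rewrite leqnn. Qed.

Definition mult f h : nat := ex_minn (mult_ex f h).

Lemma big_pow f h n : h != 0 -> (1 < size f)%N -> f ^+ n.+1 %| h -> (n < size h)%N.
Proof.
move=> hn0 sf d; have := dvdp_leq hn0 d.
have fn0 : f != 0 by rewrite -size_poly_gt0 (ltn_trans _ sf).
have := size_exp f n.+1.
have : size (f ^+ n.+1) != 0%N by rewrite size_poly_eq0 expf_neq0.
case: (size (f ^+ n.+1)) => //= m _ e.
rewrite e => le; apply: leq_trans le; rewrite ltnS.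
apply: (leq_trans (leqnSn n)); rewrite leq_pmull //.
by rewrite -ltnS prednK // (ltn_trans _ sf).
Qed.

Lemma multP f h : h != 0 -> (1 < size f)%N ->
  f ^+ mult f h %| h /\ ~~ (f ^+ (mult f h).+1 %| h).
Proof.
move=> hn0 sf; rewrite /mult; case: ex_minnP => m hm hmin.
have nd : ~~ (f ^+ m.+1 %| h).
  case/orP: hm => // le; apply/negP => /(big_pow hn0 sf).
  by rewrite ltnNge (leq_trans le).
split => //; case: m hm hmin nd => [|m] hm hmin nd; first by rewrite expr0 dvd1p.
have : ~~ ((size h <= m)%N || ~~ (f ^+ m.+1 %| h)).
  by apply/negP => /hmin; rewrite ltnn.
by rewrite negb_or negbK => /andP[].
Qed.

Lemma mult_unique f h n : h != 0 -> (1 < size f)%N ->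
  f ^+ n %| h -> ~~ (f ^+ n.+1 %| h) -> mult f h = n.
Proof.
move=> hn0 sf d nd; have [d' nd'] := multP hn0 sf.
case: (ltngtP (mult f h) n) => // lt.
  by move: nd'; rewrite (dvdp_trans (dvdp_exp2l _ lt) d).
by move: nd; rewrite (dvdp_trans (dvdp_exp2l _ lt) d').
Qed.

Lemma mult_mulf f h : irreducible_poly f -> h != 0 -> mult f (h * f) = (mult f h).+1.
Proof.
move=> irr hn0; have sf := irr_size irr; have fn0 := irr_neq0 irr.
have [d nd] := multP hn0 sf.
apply: mult_unique; rewrite ?mulf_neq0 //.
  by rewrite exprSr dvdp_mul.
by rewrite exprSr dvdp_mul2r.
Qed.

Lemma mult_mulg f g h : monic_irr f -> monic_irr g -> g != f -> h != 0 ->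
  mult g (h * f) = mult g h.
Proof.
move=> hf hg ne hn0; have sg := irr_size hg.2; have fn0 := irr_neq0 hf.2.
have cop : forall n, coprimep (g ^+ n) f.
  by move=> n; apply: coprimep_expl; apply: monic_irr_coprime.
have [d nd] := multP hn0 sg.
by apply: mult_unique; rewrite ?mulf_neq0 // Gauss_dvdpl.
Qed.

Lemma mult_ndvd f h : h != 0 -> (1 < size f)%N -> ~~ (f %| h) -> mult f h = 0%N.
Proof. by move=> hn0 sf nd; apply: mult_unique; rewrite ?expr0 ?dvd1p ?expr1. Qed.

End Mult.

Ltac pring := rewrite ?exprSr; ring.

Section Core.
Local Open Scope ring_scope.
Variables (K : fieldType) (V : lmodType K) (th : {linear V -> V}).
Local Notation act := (act th).
Implicit Types f g h p q r : {poly K}.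

Definition Stab f n := forall v, act (f ^+ n.+1) v = 0 -> act (f ^+ n) v = 0.
Definition Inc r h := forall v, act r v = 0 -> act h v = 0.

Lemma stab_S f n : Stab f n -> Stab f n.+1.
Proof.
move=> s v; rewrite exprSr act_mul => /s; rewrite -act_mul -exprSr.
by rewrite exprS mulrC act_mul.
Qed.

Lemma stab_mono f n m : (n <= m)%N -> Stab f n -> Stab f m.
Proof.
move=> le s; elim: m le => [|m IH]; first by rewrite leqn0 => /eqP <-.
by rewrite leq_eqVlt ltnS => /orP[/eqP <- // | /IH /stab_S].
Qed.

Lemma one_step f h : irreducible_poly f -> h != 0 ->
  Inc (h * f) h <-> Stab f (mult f h).
Proof.
move=> irr hn0; have sf := irr_size irr.
have [d nd] := multP hn0 sf; set a := mult f h in d nd *.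
set h' := h %/ f ^+ a.
have eh : h = h' * f ^+ a by rewrite divpK.
clearbody h' a.
have nd' : ~~ (f %| h').
  apply: contra nd => d'; rewrite eh exprS; exact: dvdp_mul.
have cop : coprimep (f ^+ a.+1) h' by apply: coprimep_expl; apply: irr_coprime.
have [u [w e]] := bezout1 cop.
split => [I v hv | S v hv].
  have hy : act (h * f) (act w v) = 0.
    rewrite -act_mul (_ : h * f * w = (h' * w) * f ^+ a.+1).
      by rewrite act_mul hv act_0v.
    by rewrite eh; pring.
  have := I _ hy; rewrite -act_mul (_ : h * w = f ^+ a * (w * h')); last first.
    by rewrite eh; pring.
  rewrite act_mul (_ : w * h' = 1 - u * f ^+ a.+1); last by rewrite -e; pring.
  by rewrite act_sub act_1 act_mul hv act_0v subr0.
have : act (f ^+ a.+1) (act h' v) = 0.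
  by rewrite -act_mul (_ : _ * _ = h * f) // eh; pring.
move/S; rewrite -act_mul (_ : _ * _ = h) //.
by rewrite eh; pring.
Qed.

Lemma kerinc r h : h %| r -> r != 0 ->
  Inc r h <-> forall f, monic_irr f -> f %| r %/ h -> Stab f (mult f h).
Proof.
move=> hr rn0; have [n hs] : exists n, (size (divp r h) <= n)%N by exists (size (divp r h)).
elim: n r h hs hr rn0 => [|n IH] r h hs hr rn0.
  move: hs; rewrite leqn0 size_poly_eq0 => /eqP q0.
  by move: rn0; rewrite -(divpK hr) q0 mul0r eqxx.
set q := r %/ h in hs *.
have er : q * h = r by rewrite divpK.
have hn0 : h != 0 by apply/eqP => h0; move: rn0; rewrite -er h0 mulr0 eqxx.
have qn0 : q != 0 by apply/eqP => q0; move: rn0; rewrite -er q0 mul0r eqxx.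
have [sq|sq] := leqP (size q) 1.
  have eq := size1_polyC sq; set c := q`_0 in eq.
  have c0 : c != 0 by apply/eqP => c0; move: qn0; rewrite eq c0 eqxx.
  split.
    move=> _ f [_ irf] df; move: (dvdp_leq qn0 df).
    by rewrite leqNgt (leq_trans _ (irr_size irf)).
  move=> _ v; rewrite -er eq act_mul act_C => /eqP.
  by rewrite scaler_eq0 (negPf c0) => /eqP.
have [f [hf df]] := monic_irr_factor sq.
have fn0 : f != 0 by apply: irr_neq0; case: hf.
set q1 := q %/ f.
have eq : q1 * f = q by rewrite divpK.
have q1n0 : q1 != 0 by apply/eqP => q0; move: qn0; rewrite -eq q0 mul0r eqxx.
have hfn0 : h * f != 0 by rewrite mulf_neq0.
have er' : q1 * (h * f) = r by rewrite -er -eq; pring.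
have hr' : h * f %| r by rewrite -er' dvdp_mull.
have eq1 : r %/ (h * f) = q1 by rewrite -er' mulpK.
have IH' := IH r (h * f); rewrite eq1 in IH'.
have {IH IH'} IH' := IH' _ hr' rn0.
have [|IH1 IH2] := IH'.
  rewrite -ltnS (leq_trans _ hs) // -eq size_mul //.
  move: (irr_size hf.2); case: (size f) => // m hm.
  by rewrite addnS /= -addn1 leq_add2l.
have split_inc : Inc r h <-> Inc r (h * f) /\ Inc (h * f) h.
  split => [I|[I1 I2] v /I1 /I2 //]; split => v.
    by move/I => hv; apply: ker_dvd hv; apply: dvdp_mulIl.
  by move=> hv; apply: I; apply: ker_dvd hv.
have os := one_step hf.2 hn0.
rewrite split_inc; split.
- case=> I1 I2 g hg dg; have S1 := IH1 I1; have Sf := os.1 I2.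
  have [->|ne] := eqVneq g f; first done.
  rewrite -eq in dg; case: (irr_prime hg.2 dg) => d.
  + by rewrite -(mult_mulg hf hg ne hn0); apply: S1.
  + by move: ne; rewrite (monic_irr_dvd hf hg d) eqxx.
- move=> H; have Sf : Stab f (mult f h) by apply: H.
  split; last by apply/os.
  apply: IH2 => g hg dg; have [->|ne] := eqVneq g f.
  + by rewrite mult_mulf //; [apply: stab_S | exact: hf.2].
  + rewrite (mult_mulg hf hg ne hn0); apply: H => //.
    by rewrite -eq; apply: dvdp_mulr.
Qed.

End Core.

Section Cmin.
Variable A : nat -> Prop.

Lemma cmin_ex : (exists a, A a) -> exists a, `[< A a >].
Proof. by case=> a h; exists a; apply: asboolT. Qed.

Definition cmin : option nat :=
  match pselect (exists a, A a) with
  | left H => Some (ex_minn (cmin_ex H))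
  | right _ => None
  end.

Lemma cmin_some n : cmin = Some n -> A n /\ forall a, A a -> (n <= a)%N.
Proof.
rewrite /cmin; case: pselect => // H [<-]; case: ex_minnP => m /asboolP hm hmin.
by split => // a ha; apply: hmin; apply: asboolT.
Qed.

Lemma cmin_le a : A a -> exists n, cmin = Some n /\ (n <= a)%N.
Proof.
move=> ha; rewrite /cmin; case: pselect => [H|H]; last by case: H; exists a.
exists (ex_minn (cmin_ex H)); split => //.
by case: ex_minnP => m _ hmin; apply: hmin; apply: asboolT.
Qed.

End Cmin.

Section Prod.
Local Open Scope ring_scope.
Variable K : fieldType.
Implicit Types f g h p q r : {poly K}.
Variable e : {poly K} -> nat.

Definition mprod (s : seq {poly K}) := \prod_(f <- s) f ^+ e f.

Lemma mprod_neq0 s : (forall f, f \in s -> monic_irr f) -> mprod s != 0.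
Proof.
move=> hs; rewrite /mprod; elim: s hs => [|f s IH] hs; first by rewrite big_nil oner_neq0.
rewrite big_cons mulf_neq0 ?expf_neq0 ?IH //.
  by apply: irr_neq0; case: (hs f (mem_head _ _)).
by move=> g hg; apply: hs; rewrite in_cons hg orbT.
Qed.

Lemma mprod_coprime g s k : monic_irr g -> g \notin s ->
  (forall f, f \in s -> monic_irr f) -> coprimep (g ^+ k) (mprod s).
Proof.
move=> hg; rewrite /mprod; elim: s => [|f s IH] ng hs; first by rewrite big_nil coprimep1.
move: ng; rewrite in_cons negb_or => /andP[ne ng].
rewrite big_cons coprimepMr IH ?andbT //; last first.
  by move=> x hx; apply: hs; rewrite in_cons hx orbT.
apply: coprimep_expl; apply: coprimep_expr; apply: monic_irr_coprime => //.
exact: hs (mem_head _ _).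
Qed.

Lemma coprime_ndvd g p : (1 < size g)%N -> coprimep g p -> ~~ (g %| p).
Proof.
move=> sg cop; apply/negP => d.
have := coprimep_dvdl d cop; rewrite coprimepp => /eqP e1.
by move: sg; rewrite e1.
Qed.

Lemma mult_mprod g s : uniq s -> (forall f, f \in s -> monic_irr f) -> monic_irr g ->
  mult g (mprod s) = if g \in s then e g else 0%N.
Proof.
move=> us hs hg; have sg := irr_size hg.2; have mn0 := mprod_neq0 hs.
case: ifP => gs; last first.
  apply: mult_ndvd => //; apply: coprime_ndvd => //.
  by rewrite -(expr1 g); apply: mprod_coprime => //; rewrite gs.
have hs' : forall f, f \in rem g s -> monic_irr f.
  by move=> f hf; apply: hs; apply: (mem_rem hf).
have ng : g \notin rem g s by rewrite mem_rem_uniqF.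
have em : mprod s = g ^+ e g * mprod (rem g s) by rewrite /mprod (big_rem g gs).
apply: mult_unique => //; rewrite em; first by apply: dvdp_mulIl.
have gn0 : g != 0 by apply: irr_neq0; case: hg.
rewrite exprSr dvdp_mul2l ?expf_neq0 //.
apply: coprime_ndvd => //; rewrite -(expr1 g); exact: mprod_coprime.
Qed.

Lemma mprod_dvd s h : uniq s -> (forall f, f \in s -> monic_irr f) ->
  (forall f, f \in s -> f ^+ e f %| h) -> mprod s %| h.
Proof.
rewrite /mprod; elim: s => [|f s IH] us hs hd; first by rewrite big_nil dvd1p.
move: us => /= /andP[nf us].
have hs' : forall x, x \in s -> monic_irr x by move=> x hx; apply: hs; rewrite in_cons hx orbT.
rewrite big_cons Gauss_dvdp ?hd ?mem_head ?IH //=.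
  by move=> x hx; apply: hd; rewrite in_cons hx orbT.
by apply: mprod_coprime => //; apply: hs; apply: mem_head.
Qed.

End Prod.

Section Equivs.
Local Open Scope ring_scope.
Variables (K : fieldType) (V : lmodType K) (th : {linear V -> V}).
Local Notation act := (act th).
Local Notation Stab := (Stab th).
Local Notation Inc := (Inc th).
Implicit Types f g h p q r : {poly K}.

Definition Aset (Q : {poly K} -> {poly K} -> Prop) f a :=
  exists h r, [/\ Q h r, f %| r %/ h & a = mult f h].

Definition cQ Q f := cmin (Aset Q f).

Lemma Q_equiv (Q : {poly K} -> {poly K} -> Prop) :
  (forall h r, Q h r -> h %| r /\ r != 0) ->
  (forall h r, Q h r -> Inc r h) <->
  (forall f, monic_irr f -> forall n, cQ Q f = Some n -> Stab f n).
Proof.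
move=> hQ; split.
  move=> I f hf n /cmin_some [[h [r [q d ->]]] _].
  by have [hr rn0] := hQ _ _ q; apply: (kerinc th hr rn0).1 => //; apply: I.
move=> S h r q; have [hr rn0] := hQ _ _ q; apply/(kerinc th hr rn0) => f hf d.
have [n [cn le]] := @cmin_le (Aset Q f) (mult f h) (ex_intro _ h (ex_intro _ r (And3 q d erefl))).
exact: stab_mono le (S f hf n cn).
Qed.

Definition eAlg (c : {poly K} -> option nat) h0 f : nat :=
  match c f with Some n => minn (mult f h0) n | None => mult f h0 end.

Lemma alg_equiv (c : {poly K} -> option nat) h0 s : h0 != 0 -> uniq s ->
  (forall f, f \in s -> monic_irr f) ->
  (forall f, monic_irr f -> f \notin s -> eAlg c h0 f = 0%N) ->
  ((forall v, act h0 v = 0) /\ (forall f, monic_irr f -> forall n, c f = Some n -> Stab f n))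
  <-> forall v, act (mprod (eAlg c h0) s) v = 0.
Proof.
move=> h0n0 us hs hout; set m := mprod _ s.
have mn0 : m != 0 by apply: mprod_neq0.
have mm : forall f, monic_irr f -> mult f m = eAlg c h0 f.
  move=> f hf; rewrite mult_mprod //; case: ifP => // /negbT fs.
  by rewrite hout.
have le_e : forall f, (eAlg c h0 f <= mult f h0)%N.
  by move=> f; rewrite /eAlg; case: (c f) => // n; rewrite geq_minl.
have mdvd : m %| h0.
  apply: mprod_dvd => // f fs; apply: dvdp_trans (dvdp_exp2l _ (le_e f)) _.
  by case: (multP h0n0 (irr_size (hs f fs).2)).
split.
  case=> H0 S.
  have I : Inc h0 m.
    apply/(kerinc th mdvd h0n0) => f hf d; rewrite mm //.
    have contra : eAlg c h0 f <> mult f h0.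
      move=> ee; have [_ nd] := multP h0n0 (irr_size hf.2); apply: (negP nd).
      rewrite -ee -(mm f hf) -(divpK mdvd) exprSr mulrC; apply: dvdp_mul => //.
      by case: (multP mn0 (irr_size hf.2)).
    case E: (c f) => [n|]; rewrite /eAlg E in contra *; last by [].
    case: (leqP (mult f h0) n) => le; first by case: contra; apply/minn_idPl.
    exact: S.
  by move=> v; apply: I; apply: H0.
move=> Hm; split; first by move=> v; apply: ker_dvd mdvd (Hm v).
move=> f hf n cn.
have Sm : Stab f (mult f m).
  apply/(one_step th hf.2 mn0) => v _; exact: Hm.
apply: stab_mono Sm; rewrite mm // /eAlg cn geq_minr //.
Qed.

End Equivs.

Section Syn.
Local Open Scope ring_scope.
Variable K : fieldType.
Implicit Types f g h p q r : {poly K}.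

Definition Gc (rhos : seq {poly K}) : {poly K} := foldr (@gcdp K) 0 rhos.
Definition Rs (rhoss : seq (seq {poly K})) : {poly K} := foldr (@plcm K) 1 (map Gc rhoss).

Section OnV.
Variables (V : lmodType K) (th : {linear V -> V}).
Local Notation act := (act th).

Definition capV (rhos : seq {poly K}) (v : V) := forall rho, rho \in rhos -> act rho v = 0.
Fixpoint sumV (rhoss : seq (seq {poly K})) (v : V) : Prop :=
  match rhoss with
  | [::] => v = 0
  | rhos :: rest => exists w u, [/\ capV rhos w, sumV rest u & v = w + u]
  end.

Lemma capV_iff rhos v : capV rhos v <-> act (Gc rhos) v = 0.
Proof.
rewrite /capV /Gc; elim: rhos => [|rho rhos IH] /=; first by rewrite act_0.
rewrite -ker_gcd -IH; split.
  by move=> h; split; [apply: h; apply: mem_head | move=> x hx; apply: h; rewrite in_cons hx orbT].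
by case=> h1 h2 x; rewrite in_cons => /orP[/eqP -> // | /h2].
Qed.

Lemma sumV_iff rhoss v : sumV rhoss v <-> act (Rs rhoss) v = 0.
Proof.
rewrite /Rs; elim: rhoss v => [|rhos rest IH] v /=; first by rewrite act_1.
rewrite -ker_lcm; split.
  case=> w [u [hw hu ->]]; exists w, u; split => //; [exact/capV_iff | exact/IH].
case=> w [u [hw hu ->]]; exists w, u; split => //; [exact/capV_iff | exact/IH].
Qed.

Definition KEq r s := forall v, act r v = 0 <-> act s v = 0.

Definition GC (c : {poly K} -> option nat) (d : option nat) : Prop :=
  match d with
  | Some _ => forall s, finite_support c s -> forall v, act (mipo_along c s) v = 0
  | None => forall f, monic_irr f -> forall n, c f = Some n ->
      forall v, act (f ^+ n) v = 0 <-> act (f ^+ n.+1) v = 0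
  end.

End OnV.

Definition Cnd (J : Type) (Rp : J -> {poly K} * {poly K}) h r :=
  exists j, (r = (Rp j).1 \/ r = (Rp j).2) /\ h = gcdp (Rp j).1 (Rp j).2.

Lemma Cnd_dvd J Rp h r : @Cnd J Rp h r -> h %| r.
Proof. by case=> j [[->|->] ->]; rewrite ?dvdp_gcdl ?dvdp_gcdr. Qed.

Lemma KEq_Cnd J Rp (V : lmodType K) (th : {linear V -> V}) :
  (forall j : J, KEq th (Rp j).1 (Rp j).2) <-> (forall h r, Cnd Rp h r -> Inc th r h).
Proof.
split.
  move=> H h r [j [er ->]] v; rewrite -ker_gcd; case: er => -> hv; split => //.
  - by apply/(H j).
  - by apply/(H j).
move=> H j v; split => hv.
  apply: (ker_dvd (dvdp_gcdr (Rp j).1 (Rp j).2)); apply: (H _ (Rp j).1) => //.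
  by exists j; split => //; left.
apply: (ker_dvd (dvdp_gcdl (Rp j).1 (Rp j).2)); apply: (H _ (Rp j).2) => //.
by exists j; split => //; right.
Qed.

End Syn.

Section Choose.
Local Open Scope ring_scope.
Variable K : fieldType.

Lemma choose_cd (J : Type) (E : J -> seq (seq {poly K}) * seq (seq {poly K})) :
  exists (c : {poly K} -> option nat) (d : option nat),
    (d = None \/ exists s, finite_support c s /\
        d = Some (\sum_(f <- s) ((size f).-1 * odflt 0%N (c f))%N)%N) /\
    forall (V : lmodType K) (th : {linear V -> V}),
      (forall j, KEq th (Rs (E j).1) (Rs (E j).2)) <-> GC th c d.
Proof.
pose Rp := fun j => (Rs (E j).1, Rs (E j).2).
have eqv : forall (V : lmodType K) (th : {linear V -> V}),
    (forall j, KEq th (Rs (E j).1) (Rs (E j).2)) <-> (forall h r, Cnd Rp h r -> Inc th r h).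
  by move=> V th; exact: (KEq_Cnd Rp th).
case: (classic (exists h0, h0 != 0 /\ Cnd Rp h0 0)) => [[h0 [h0n0 ch0]] | nB].
- pose Q2 h' r' := exists h r, [/\ Cnd Rp h r, h' = gcdp h h0 & r' = gcdp r h0].
  have hQ2 : forall h r, Q2 h r -> h %| r /\ r != 0.
    move=> h' r' [h [r [cn -> ->]]]; split.
      rewrite dvdp_gcd dvdp_gcdr andbT.
      exact: dvdp_trans (dvdp_gcdl _ _) (Cnd_dvd cn).
    by rewrite gcdp_eq0 negb_and h0n0 orbT.
  pose c0 := cQ Q2; pose e := eAlg c0 h0.
  have [s [us hs]] := factors h0n0.
  have eout : forall f, monic_irr f -> f \notin s -> e f = 0%N.
    move=> f hf fs; apply/eqP; rewrite -leqn0.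
    have -> : 0%N = mult f h0.
      apply/esym/mult_ndvd => //; first exact: irr_size hf.2.
      by apply/negP => d; move: fs; rewrite (iffRL (hs f)).
    rewrite /e /eAlg; case: (c0 f) => // n; exact: geq_minl.
  have hs' : forall f, f \in s -> monic_irr f by move=> f /hs [].
  have fs : finite_support (fun f => Some (e f)) s.
    split => // f hf hn; first by rewrite eout.
  exists (fun f => Some (e f)), (Some (\sum_(f <- s) ((size f).-1 * e f))%N).
  split; first by right; exists s.
  move=> V th; rewrite eqv.
  have step1 : (forall h r, Cnd Rp h r -> Inc th r h) <->
      (forall v, act th h0 v = 0) /\ (forall h r, Q2 h r -> Inc th r h).
    split.
      move=> H; have H0 : forall v, act th h0 v = 0.
        by move=> v; apply: (H h0 0) => //; rewrite act_0.
      split => // h' r' [h [r [cn -> ->]]] v /ker_gcd [hr _].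
      by apply/ker_gcd; split => //; apply: (H h r).
    case=> H0 H h r cn v hr; have : act th (gcdp h h0) v = 0.
      by apply: (H _ (gcdp r h0)); [exists h, r | apply/ker_gcd].
    by case/ker_gcd.
  rewrite step1 (Q_equiv th hQ2) /=.
  split.
    move=> H s' [us' hs'' hout _] v.
    have := (alg_equiv th (c := c0) h0n0 us' hs'' _).1 H v.
    have -> : mipo_along (fun f => Some (e f)) s' = mprod e s' by [].
    apply; move=> f hf nf; have := hout f hf nf; by case.
  move=> G; apply: (alg_equiv th (c := c0) h0n0 us hs' eout).2.
  by move=> v; apply: (G s fs v).
- pose Q1 h r := Cnd Rp h r /\ r != 0.
  have hQ1 : forall h r, Q1 h r -> h %| r /\ r != 0.
    by move=> h r [cn rn0]; split => //; exact: Cnd_dvd cn.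
  exists (cQ Q1), None; split; first by left.
  move=> V th; rewrite eqv /=.
  have step1 : (forall h r, Cnd Rp h r -> Inc th r h) <-> (forall h r, Q1 h r -> Inc th r h).
    split; first by move=> H h r [cn _]; apply: H.
    move=> H h r cn; have [r0|rn0] := eqVneq r 0; last by apply: H.
    have [h0|hn0] := eqVneq h 0; first by move=> v; rewrite h0 act_0.
    by case: nB; exists h; split => //; rewrite -r0.
  rewrite step1 (Q_equiv th hQ1); split.
    move=> S f hf n cn v; split; last exact: S.
    by move=> hv; rewrite exprS act_mul hv act_0v.
  by move=> G f hf n cn v; apply: (G f hf n cn v).2.
Qed.

End Choose.

Section Model.
Local Open Scope ring_scope.
Variables (L : language) (K : fieldType) (M : structure L) (o : vsops K M) (theta : M -> M).
Hypothesis Hvs : is_vspace o.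
Hypothesis Hth : theta_axioms o theta.

Let V0 : vin o (vzero o). Proof. by have [[a1 a2 a3 a4 a5] [[b1 b2 b3] [c1 c2 c3]]] := Hvs. Qed.
Let Vad u v : vin o u -> vin o v -> vin o (vadd o u v). Proof. by have [[a1 a2 a3 a4 a5] [[b1 b2 b3] [c1 c2 c3]]] := Hvs; apply: a2. Qed.
Let Vsc a v : vin o v -> vin o (vscale o a v). Proof. by have [[a1 a2 a3 a4 a5] [[b1 b2 b3] [c1 c2 c3]]] := Hvs; apply: a3. Qed.
Let Vth v : vin o v -> vin o (theta v). Proof. by case: Hth => H _ _ _; apply: H. Qed.

Definition VT := {x : M | vin o x}.
HB.instance Definition _ := gen_eqMixin VT.
HB.instance Definition _ := gen_choiceMixin VT.

Definition vz : VT := exist _ _ V0.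
Definition vad (x y : VT) : VT := exist _ _ (Vad (proj2_sig x) (proj2_sig y)).
Definition vsc a (x : VT) : VT := exist _ _ (Vsc a (proj2_sig x)).
Definition vop (x : VT) : VT := vsc (-1) x.

Lemma VT_eq (x y : VT) : proj1_sig x = proj1_sig y -> x = y.
Proof. by case: x => x px; case: y => y py /= e; apply: eq_exist. Qed.

Lemma vadA : associative vad.
Proof.
move=> [x px] [y py] [z pz]; apply: VT_eq => /=.
by have [[a1 a2 a3 a4 a5] [[b1 b2 b3] [c1 c2 c3]]] := Hvs; apply: a4.
Qed.
Lemma vadC : commutative vad.
Proof. by move=> [x px] [y py]; apply: VT_eq => /=; have [[a1 a2 a3 a4 a5] [[b1 b2 b3] [c1 c2 c3]]] := Hvs; apply: a5. Qed.
Lemma vad0 : left_id vz vad.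
Proof. by move=> [x px]; apply: VT_eq => /=; have [[a1 a2 a3 a4 a5] [[b1 b2 b3] [c1 c2 c3]]] := Hvs; apply: b1. Qed.
Lemma vadN : left_inverse vz vop vad.
Proof.
move=> [x px]; apply: VT_eq => /=.
have [[a1 a2 a3 a4 a5] [[b1 b2 b3] [c1 c2 c3]]] := Hvs; rewrite a5 //; [exact: b2 | exact: Vsc].
Qed.

HB.instance Definition _ := GRing.isZmodule.Build VT vadA vadC vad0 vadN.

Lemma vscA a b (x : VT) : vsc a (vsc b x) = vsc (a * b) x.
Proof. by case: x => x px; apply: VT_eq => /=; have [[a1 a2 a3 a4 a5] [[b1 b2 b3] [c1 c2 c3]]] := Hvs; rewrite c1. Qed.
Lemma vsc1 : left_id 1 vsc.
Proof. by move=> [x px]; apply: VT_eq => /=; have [[a1 a2 a3 a4 a5] [[b1 b2 b3] [c1 c2 c3]]] := Hvs; apply: b3. Qed.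
Lemma vscDr : right_distributive vsc +%R.
Proof. by move=> a [x px] [y py]; apply: VT_eq => /=; have [[a1 a2 a3 a4 a5] [[b1 b2 b3] [c1 c2 c3]]] := Hvs; apply: c2. Qed.
Lemma vscDl (x : VT) : {morph vsc^~ x : a b / a + b}.
Proof. by move=> a b; case: x => x px; apply: VT_eq => /=; have [[a1 a2 a3 a4 a5] [[b1 b2 b3] [c1 c2 c3]]] := Hvs; apply: c3. Qed.

HB.instance Definition _ := GRing.Zmodule_isLmodule.Build K VT vscA vsc1 vscDr vscDl.

Definition thT (x : VT) : VT := exist _ _ (Vth (proj2_sig x)).

Lemma thT_linear : linear thT.
Proof.
move=> a [x px] [y py]; apply: VT_eq => /=.
case: Hth => _ HD HZ _; rewrite HD ?HZ //; exact: Vsc.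
Qed.

HB.instance Definition _ := GRing.isLinear.Build K VT VT *:%R thT thT_linear.

Lemma val_sum (l : seq nat) (G : nat -> VT) :
  proj1_sig (\sum_(i <- l) G i) = foldr (fun i acc => vadd o (proj1_sig (G i)) acc) (vzero o) l.
Proof. by elim: l => [|i l IH]; rewrite ?big_nil ?big_cons //= -IH. Qed.

Lemma val_iter i (x : VT) : proj1_sig (iter i thT x) = iter i theta (proj1_sig x).
Proof. by elim: i => //= i ->. Qed.

Lemma peval_act p (x : VT) : peval o theta p (proj1_sig x) = proj1_sig (act thT p x).
Proof.
rewrite /act -(big_mkord xpredT (fun i => p`_i *: iter i thT x)) /index_iota subn0.
by rewrite val_sum /peval; congr foldr; apply: funext => i; apply: funext => acc /=; rewrite val_iter.
Qed.

Lemma inKer_act p (x : VT) : inKer o theta p (proj1_sig x) <-> act thT p x = 0.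
Proof.
rewrite /inKer peval_act; split; first by case=> _ e; apply: VT_eq.
by move=> ->; split => //; exact: proj2_sig.
Qed.

Lemma inCap_act rhos (x : VT) : inCapKer o theta rhos (proj1_sig x) <-> capV thT rhos x.
Proof.
split; first by case=> _ H rho /H /inKer_act.
by move=> H; split; [exact: proj2_sig | move=> rho /H /inKer_act].
Qed.

Lemma inSum_in rhoss y : inSumCapKer o theta rhoss y -> vin o y.
Proof.
elim: rhoss y => [|rhos rest IH] y /=; first by move=> ->.
by case=> w [u [[hw _] hu ->]]; apply: Vad => //; apply: IH.
Qed.

Lemma inSum_act rhoss (x : VT) : inSumCapKer o theta rhoss (proj1_sig x) <-> sumV thT rhoss x.
Proof.
elim: rhoss x => [|rhos rest IH] x /=.
  by split => [e|->] //; apply: VT_eq.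
split.
  case=> w [u [hw hu e]].
  have pw : vin o w by case: hw.
  have pu : vin o u by apply: inSum_in hu.
  exists (exist _ w pw), (exist _ u pu); split.
  - by apply/inCap_act.
  - by apply/IH.
  - by apply: VT_eq.
case=> w [u [hw hu ->]]; exists (proj1_sig w), (proj1_sig u); split => //.
- by apply/inCap_act.
- by apply/IH.
Qed.

Lemma lift_all (P : M -> Prop) : (forall y, ~ vin o y -> P y) ->
  (forall x : VT, P (proj1_sig x)) -> forall y, P y.
Proof.
move=> Hn Hx y; case: (classic (vin o y)) => hy; last exact: Hn.
exact: (Hx (exist _ y hy)).
Qed.

Lemma KE_iff e : kernel_equation o theta e <-> KEq thT (Rs e.1) (Rs e.2).
Proof.
split.
  by move=> H x; rewrite -!sumV_iff -!inSum_act.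
move=> H; apply: lift_all.
  by move=> y hy; split => /inSum_in.
by move=> x; rewrite !inSum_act !sumV_iff.
Qed.

Lemma Cendo_iff c d : C_endo o theta c d <-> GC thT c d.
Proof.
case: d => [k|] /=.
  split => H s fs.
    by move=> x; apply/inKer_act; apply/(H s fs); exact: proj2_sig.
  move=> y; split; last by case.
  by move=> hy; apply/(inKer_act _ (exist _ y hy)); apply: H.
split => H f hf n cn.
  by move=> x; rewrite -!inKer_act; apply: H.
apply: lift_all; first by move=> y hy; split; case.
by move=> x; rewrite !inKer_act; apply: H.
Qed.

Lemma nontriv : vs_infinite o -> exists x : VT, x != 0.
Proof.
move=> /(_ [:: vzero o]) [v [hv nin]]; exists (exist _ v hv).
apply/eqP => e; apply: nin; left; move: e => /(congr1 (@proj1_sig _ _)) /= ->; by [].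
Qed.

End Model.

Section Transfer.
Local Open Scope ring_scope.
Variables (L : language) (K : fieldType) (D : vsdef L K) (M : structure L).

Lemma transfer (o1 o : vsops K M) : defines D o1 -> defines D o -> is_vspace o1 -> is_vspace o.
Proof.
move=> [i1 [z1 [ad1 sc1]]] [i [z [ad sc]]] Hv.
have hin x : vin o1 x <-> vin o x.
  by rewrite -(i1 (fun _ => x)) (i (fun _ => x)).
have hz : vzero o1 = vzero o.
  by apply/(z (fun _ => vzero o1))/(z1 (fun _ => vzero o1)).
have hadd u v : vin o u -> vin o v -> vadd o1 u v = vadd o u v.
  move=> hu hv; pose s := fun n : nat => if n == 0%N then u else if n == 1%N then v else vadd o1 u v.
  have : sat s (phiadd D) by apply/ad1; split => //; apply/hin.
  by move/ad => [].
have hsc a v : vin o v -> vscale o1 a v = vscale o a v.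
  move=> hv; pose s := fun n : nat => if n == 0%N then v else vscale o1 a v.
  have : sat s (phisc D a) by apply/sc1; split => //; apply/hin.
  by move/sc => [].
have [[a1 a2 a3 a4 a5] [[b1 b2 b3] [c1 c2 c3]]] := Hv.
have Ad u v : vin o u -> vin o v -> vin o (vadd o u v).
  by move=> hu hv; rewrite -hadd //; apply/hin; apply: a2; apply/hin.
have Sc a v : vin o v -> vin o (vscale o a v).
  by move=> hv; rewrite -hsc //; apply/hin; apply: a3; apply/hin.
have Z : vin o (vzero o) by rewrite -hz; apply/hin.
have Ad1 u v : vin o u -> vin o v -> vin o (vadd o1 u v).
  by move=> hu hv; rewrite hadd //; apply: Ad.
have Sc1 a v : vin o v -> vin o (vscale o1 a v).
  by move=> hv; rewrite hsc //; apply: Sc.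
split; [split => // | split; split].
- move=> u v w hu hv hw.
  have h1 := Ad1 v w hv hw; have h2 := Ad1 u v hu hv.
  rewrite -(hadd v w) // -(hadd u v) // -(hadd u (vadd o1 v w)) //.
  rewrite -(hadd (vadd o1 u v) w) //; apply: a4; exact/hin.
- move=> u v hu hv; rewrite -(hadd u v hu hv) -(hadd v u hv hu); apply: a5; exact/hin.
- move=> v hv; rewrite -(hadd (vzero o) v Z hv) -hz; apply: b1; exact/hin.
- move=> v hv; rewrite -(hsc (-1) v hv) -(hadd v _ hv (Sc1 (-1) v hv)) -hz; apply: b2; exact/hin.
- move=> v hv; rewrite -(hsc 1 v hv); apply: b3; exact/hin.
- move=> a b v hv; rewrite -(hsc b v hv) -(hsc a _ (Sc1 b v hv)) -(hsc (a * b) v hv).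
  apply: c1; exact/hin.
- move=> a u v hu hv; rewrite -(hadd u v hu hv) -(hsc a _ (Ad1 u v hu hv)) -(hsc a u hu).
  rewrite -(hsc a v hv) -(hadd _ _ (Sc1 a u hu) (Sc1 a v hv)); apply: c2; exact/hin.
- move=> a b v hv; rewrite -(hsc (a + b) v hv) -(hsc a v hv) -(hsc b v hv).
  rewrite -(hadd _ _ (Sc1 a v hv) (Sc1 b v hv)); apply: c3; exact/hin.
Qed.

End Transfer.

Lemma mipo_one (K : fieldType) (c : {poly K} -> option nat) s :
  finite_support c s ->
  (\sum_(f <- s) ((size f).-1 * odflt 0%N (c f))%N)%N = 0%N -> mipo_along c s = 1%R.
Proof.
move=> [_ hs _ _] /eqP; rewrite sum_nat_seq_eq0 => /allP H.
rewrite /mipo_along big1_seq // => f fs.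
have := H f fs; rewrite /= muln_eq0 => /orP[|/eqP -> //].
by have := irr_size (hs f fs).2; case: (size f) => [|[|]].
Qed.

Theorem corollary2p12 (L : language) (T : theory L) (K : fieldType)
    (D : vsdef L K) :
  is_theory T -> model_complete T -> defines_vs_in T D ->
  forall (J : Type) (E : J -> seq (seq {poly K}) * seq (seq {poly K})),
    (* the theory T_theta \cup {E j : j \in J} is consistent *)
    (exists (M : structure L) (theta : M -> M), models_TthetaE T D E theta) ->
    (* ... and is equivalent to T_theta^C for some kernel configuration C *)
    exists (c : {poly K} -> option nat) (d : option nat),
      is_kconf c d /\
      forall (M : structure L) (theta : M -> M),
        models_TthetaE T D E theta <-> models_TthetaC T D c d theta.
Proof.
move=> _ _ [_ _ _ _ HD] J E [M0 [th0 HE0]].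
have [c [d [hcd Heq]]] := choose_cd E.
have bridge : forall (M : structure L) (theta : M -> M) (o : vsops K M),
    models T M -> theta_axioms o theta -> defines D o ->
    ((forall j, kernel_equation o theta (E j)) <-> C_endo o theta c d).
  move=> M theta o hT hth hd.
  have [o1 [d1 v1 _]] := HD M hT.
  have Hvs := transfer d1 hd v1.
  rewrite (Cendo_iff Hvs hth) -Heq.
  by split => H j; [apply/(KE_iff Hvs hth) | apply/(KE_iff Hvs hth)]; apply: H.
exists c, d; split.
  split => //; move=> hd0; case: hcd => [|[s [fs ed]]]; first by rewrite hd0.
  move: HE0 => [[hT0 hth0] hE0].
  have [o0 [d0 v0 inf0]] := HD M0 hT0.
  have Hth0 := hth0 o0 d0.
  have := (bridge M0 th0 o0 hT0 Hth0 d0).1 (hE0 o0 d0).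
  rewrite (Cendo_iff v0 Hth0) hd0 /= => G.
  have [x xn0] := nontriv v0 inf0.
  have hm : mipo_along c s = 1%R.
    by apply: mipo_one fs _; move: ed; rewrite hd0 => -[] e; rewrite -e.
  by have := G s fs x; rewrite hm act_1 => /eqP; rewrite (negPf xn0).
move=> M theta; split.
  move=> [[hT hth] hE]; split => // o hd.
  by apply/(bridge M theta o hT (hth o hd) hd); apply: hE.
move=> [[hT hth] hC]; split => // o hd.
by apply/(bridge M theta o hT (hth o hd) hd); apply: hC.
Qed.
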